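(* Let $E\in GL_m(k)$ and $F\in GL_n(k)$, and assume $H(E,F)\neq 0$. Then $(H(E),H(F),H(E,F),H(F,E))$ is a Hopf-Galois system, with structure maps $\alpha,\beta,\gamma,\delta$ all given on generators by $u_{ij}\mapsto\sum_k u_{ik}\otimes u_{kj}$ and $v_{ij}\mapsto\sum_k v_{ik}\otimes v_{kj}$.
   Context: $k$ is a field. For $E\in GL_m(k)$, $F\in GL_n(k)$, $H(E,F)$ is the universal algebra with generators $u_{ij},v_{ij}$, $1\le i\le m$, $1\le j\le n$, and relations $u\,{}^tv=I_m=v\,F\,{}^tu\,E^{-1}$ and ${}^tv\,u=I_n=F\,{}^tu\,E^{-1}v$, where $u=(u_{ij})$, $v=(v_{ij})$. $H(F):=H(F,F)$ is the universal cosovereign Hopf algebra, with $\Delta(u_{ij})=\sum_k u_{ik}\otimes u_{kj}$, $\Delta(v_{ij})=\sum_k v_{ik}\otimes v_{kj}$, $\varepsilon(u_{ij})=\varepsilon(v_{ij})=\delta_{ij}$. A Hopf-Galois system consists of four non-zero $k$-algebras $(A,B,Z,T)$ with: (HG1) $A,B$ bialgebras; (HG2) $Z$ an $A$-$B$-bicomodule algebra with coactions $\alpha:Z\to A\otimes Z$, $\beta:Z\to Z\otimes B$; (HG3) algebra morphisms $\gamma:A\to Z\otimes T$, $\delta:B\to T\otimes Z$ with $(\gamma\otimes 1_Z)\alpha=(1_Z\otimes\delta)\beta$, $(\alpha\otimes 1_T)\gamma=(1_A\otimes\gamma)\Delta_A$, $(1_T\otimes\beta)\delta=(\delta\otimes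 1_B)\Delta_B$; (HG4) a linear map $S:T\to Z$ with $m_Z(1_Z\otimes S)\gamma=u_Z\varepsilon_A$ and $m_Z(S\otimes 1_Z)\delta=u_Z\varepsilon_B$. *)

(* Defs.v *)
(* Presented (universal) k-algebras are encoded syntactically:
   an algebra given by generators X and relations R is the type [term X] of
   k-algebra expressions in the generators, modulo the congruence [teq R]
   generated by the axioms of a unital associative k-algebra and by R.
   Tensor products of presented algebras are presented algebras on the disjoint
   union of the generators (relations of both factors + commutation of the two
   families of generators). Algebra maps are given on generators. *)
From HB Require Import structures.
From mathcomp Require Import all_boot all_algebra.

Set Implicit Arguments.
Unset Strict Implicit.
Unset Printing Implicit Defensive.

Import GRing.Theory.
Local Open Scope ring_scope.

Section HopfGalois.
Context {k : fieldType}.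

Inductive term (X : Type) : Type :=
| tgen of X
| tscal of k
| tadd of term X & term X
| tmul of term X & term X.
Arguments tgen {X}.
Arguments tscal {X}.
Arguments tadd {X}.
Arguments tmul {X}.

Fixpoint subst (X Y : Type) (f : X -> term Y) (t : term X) : term Y :=
  match t with
  | tgen x => f x
  | tscal c => tscal c
  | tadd a b => tadd (subst f a) (subst f b)
  | tmul a b => tmul (subst f a) (subst f b)
  end.

Definition tmap (X Y : Type) (h : X -> Y) : term X -> term Y :=
  subst (fun x => tgen (h x)).

Inductive teq (X : Type) (R : term X -> term X -> Prop) : term X -> term X -> Prop :=
| teq_rel a b : R a b -> teq R a b
| teq_refl a : teq R a a
| teq_sym a b : teq R a b -> teq R b a
| teq_trans a b c : teq R a b -> teq R b c -> teq R a c
| teq_add a a' b b' : teq R a a' -> teq R b b' -> teq R (tadd a b) (tadd a' b')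
| teq_mul a a' b b' : teq R a a' -> teq R b b' -> teq R (tmul a b) (tmul a' b')
| teq_addA a b c : teq R (tadd a (tadd b c)) (tadd (tadd a b) c)
| teq_addC a b : teq R (tadd a b) (tadd b a)
| teq_add0 a : teq R (tadd (tscal 0) a) a
| teq_addN a : teq R (tadd a (tmul (tscal (-1)) a)) (tscal 0)
| teq_mulA a b c : teq R (tmul a (tmul b c)) (tmul (tmul a b) c)
| teq_mul1l a : teq R (tmul (tscal 1) a) a
| teq_mul1r a : teq R (tmul a (tscal 1)) a
| teq_mulDl a b c : teq R (tmul (tadd a b) c) (tadd (tmul a c) (tmul b c))
| teq_mulDr a b c : teq R (tmul a (tadd b c)) (tadd (tmul a b) (tmul a c))
| teq_scalD (x y : k) : teq R (tadd (tscal x) (tscal y)) (tscal (x + y))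
| teq_scalM (x y : k) : teq R (tmul (tscal x) (tscal y)) (tscal (x * y))
| teq_scalC (x : k) a : teq R (tmul (tscal x) a) (tmul a (tscal x)).

Record pres := Pres { gens : Type; rels : term gens -> term gens -> Prop }.

Definition peq (P : pres) : term (gens P) -> term (gens P) -> Prop := teq (@rels P).
Arguments peq : clear implicits.

Definition nonzero (P : pres) : Prop := ~ peq P (tscal 1) (tscal 0).

Definition kP : pres := @Pres Empty_set (fun _ _ => False).

Inductive tens_rel (P Q : pres) : term (gens P + gens Q) -> term (gens P + gens Q) -> Prop :=
| tr_l a b : @rels P a b -> tens_rel (tmap inl a) (tmap inl b)
| tr_r a b : @rels Q a b -> tens_rel (tmap inr a) (tmap inr b)
| tr_comm (x : gens P) (y : gens Q) :
    tens_rel (tmul (tgen (inl x)) (tgen (inr y))) (tmul (tgen (inr y)) (tgen (inl x))).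

Definition tens (P Q : pres) : pres := @Pres (gens P + gens Q)%type (@tens_rel P Q).

Definition ahom (P Q : pres) : Type := gens P -> term (gens Q).

Definition is_hom (P Q : pres) (f : ahom P Q) : Prop :=
  forall a b, rels a b -> peq Q (subst f a) (subst f b).

Definition heq (P Q : pres) (f g : ahom P Q) : Prop :=
  forall t : term (gens P), peq Q (subst f t) (subst g t).

(* composition: first f, then g *)
Definition comp (P Q R : pres) (f : ahom P Q) (g : ahom Q R) : ahom P R :=
  fun x => subst g (f x).

Definition idh (P : pres) : ahom P P := fun x => tgen x.
Arguments idh : clear implicits.

Definition tensh (P Q P' Q' : pres) (f : ahom P P') (g : ahom Q Q') :
  ahom (tens P Q) (tens P' Q') :=
  fun z => match z with
           | inl x => tmap inl (f x)
           | inr y => tmap inr (g y)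
           end.

Definition assoc (P Q R : pres) : ahom (tens (tens P Q) R) (tens P (tens Q R)) :=
  fun z => match z with
           | inl (inl x) => tgen (inl x)
           | inl (inr y) => tgen (inr (inl y))
           | inr w => tgen (inr (inr w))
           end.

Definition lunit (P : pres) : ahom P (tens kP P) := fun x => tgen (inr x).
Definition runit (P : pres) : ahom P (tens P kP) := fun x => tgen (inl x).

Definition unith (P : pres) : ahom kP P := fun e => match e with end.

Definition is_linmap (P Q : pres) (S : term (gens P) -> term (gens Q)) : Prop :=
  [/\ (forall a b, peq P a b -> peq Q (S a) (S b)),
      (forall a b, peq Q (S (tadd a b)) (tadd (S a) (S b))) &
      (forall (c : k) a, peq Q (S (tmul (tscal c) a)) (tmul (tscal c) (S a)))].

Definition is_bialgebra (A : pres) (D : ahom A (tens A A)) (e : ahom A kP) : Prop :=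
  [/\ is_hom D, is_hom e,
      heq (comp (comp D (tensh D (idh A))) (@assoc A A A)) (comp D (tensh (idh A) D)),
      heq (comp D (tensh e (idh A))) (@lunit A) &
      heq (comp D (tensh (idh A) e)) (@runit A)].

Definition is_bicomodule_algebra (A B Z : pres)
  (DA : ahom A (tens A A)) (eA : ahom A kP) (DB : ahom B (tens B B)) (eB : ahom B kP)
  (alpha : ahom Z (tens A Z)) (beta : ahom Z (tens Z B)) : Prop :=
  [/\ is_hom alpha, is_hom beta,
      heq (comp (comp alpha (tensh DA (idh Z))) (@assoc A A Z))
          (comp alpha (tensh (idh A) alpha))
      /\ heq (comp alpha (tensh eA (idh Z))) (@lunit Z),
      heq (comp (comp beta (tensh beta (idh B))) (@assoc Z B B))
          (comp beta (tensh (idh Z) DB))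
      /\ heq (comp beta (tensh (idh Z) eB)) (@runit Z) &
      heq (comp (comp beta (tensh alpha (idh B))) (@assoc A Z B))
          (comp alpha (tensh (idh A) beta))].

Definition hopf_galois_system (A B Z T : pres)
  (DA : ahom A (tens A A)) (eA : ahom A kP) (DB : ahom B (tens B B)) (eB : ahom B kP)
  (alpha : ahom Z (tens A Z)) (beta : ahom Z (tens Z B))
  (gamma : ahom A (tens Z T)) (delta : ahom B (tens T Z)) : Prop :=
  [/\
      [/\ nonzero A, nonzero B, nonzero Z & nonzero T],
      is_bialgebra DA eA /\ is_bialgebra DB eB,
      is_bicomodule_algebra DA eA DB eB alpha beta,
      [/\ is_hom gamma, is_hom delta,
          heq (comp (comp alpha (tensh gamma (idh Z))) (@assoc Z T Z))
              (comp beta (tensh (idh Z) delta)),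
          heq (comp (comp gamma (tensh alpha (idh T))) (@assoc A Z T))
              (comp DA (tensh (idh A) gamma)) &
          heq (comp delta (tensh (idh T) beta))
              (comp (comp DB (tensh delta (idh B))) (@assoc T Z B))] &
      exists S : term (gens T) -> term (gens Z),
        [/\ is_linmap S,
            (* m_Z (1_Z (x) S) gamma = u_Z eps_A *)
            exists Phi : term (gens (tens Z T)) -> term (gens Z),
              [/\ is_linmap Phi,
                  (forall (z : term (gens Z)) (t : term (gens T)),
                      peq Z (Phi (tmul (tmap inl z) (tmap inr t))) (tmul z (S t))) &
                  (forall a : term (gens A),
                      peq Z (Phi (subst gamma a)) (subst (comp eA (@unith Z)) a))] &
            (* m_Z (S (x) 1_Z) delta = u_Z eps_B *)
            exists Psi : term (gens (tens T Z)) -> term (gens Z),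
              [/\ is_linmap Psi,
                  (forall (t : term (gens T)) (z : term (gens Z)),
                      peq Z (Psi (tmul (tmap inl t) (tmap inr z))) (tmul (S t) z)) &
                  (forall b : term (gens B),
                      peq Z (Psi (subst delta b)) (subst (comp eB (@unith Z)) b))]]].

Arguments hopf_galois_system : clear implicits.

Inductive gen (m n : nat) : Type :=
| GU of 'I_m & 'I_n
| GV of 'I_m & 'I_n.

Definition tsum (X : Type) (p : nat) (f : 'I_p -> term X) : term X :=
  \big[@tadd X / tscal 0]_(l < p) f l.

Definition tkron (X : Type) (i j : nat) : term X := tscal (i == j)%:R.

(* relations  u tv = I_m,  v F tu E^-1 = I_m,  tv u = I_n,  F tu E^-1 v = I_n *)
Inductive HEF_rel (m n : nat) (E : 'M[k]_m) (F : 'M[k]_n) :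
  term (gen m n) -> term (gen m n) -> Prop :=
| hr1 (i j : 'I_m) :
    HEF_rel E F (tsum (fun l : 'I_n => tmul (tgen (GU i l)) (tgen (GV j l)))) (tkron _ i j)
| hr2 (i j : 'I_m) :
    HEF_rel E F
      (tsum (fun a : 'I_n => tsum (fun b : 'I_n => tsum (fun c : 'I_m =>
         tmul (tmul (tmul (tgen (GV i a)) (tscal (F a b))) (tgen (GU c b)))
              (tscal (invmx E c j))))))
      (tkron _ i j)
| hr3 (i j : 'I_n) :
    HEF_rel E F (tsum (fun l : 'I_m => tmul (tgen (GV l i)) (tgen (GU l j)))) (tkron _ i j)
| hr4 (i j : 'I_n) :
    HEF_rel E F
      (tsum (fun a : 'I_n => tsum (fun b : 'I_m => tsum (fun c : 'I_m =>
         tmul (tmul (tmul (tscal (F i a)) (tgen (GU b a))) (tscal (invmx E b c)))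
              (tgen (GV c j))))))
      (tkron _ i j).

Definition HP (m n : nat) (E : 'M[k]_m) (F : 'M[k]_n) : pres :=
  @Pres (gen m n) (@HEF_rel m n E F).

Definition comult (p q r : nat) (g : gen p r) : term (gen p q + gen q r) :=
  match g with
  | GU i j => tsum (fun l : 'I_q => tmul (tgen (inl (GU i l))) (tgen (inr (GU l j))))
  | GV i j => tsum (fun l : 'I_q => tmul (tgen (inl (GV i l))) (tgen (inr (GV l j))))
  end.

Definition counit (p : nat) (g : gen p p) : term Empty_set :=
  match g with
  | GU i j => tkron _ i j
  | GV i j => tkron _ i j
  end.

End HopfGalois.

Arguments peq {k} P _ _.
Arguments idh {k} P _.
Arguments hopf_galois_system {k} A B Z T DA eA DB eB alpha beta gamma delta.
Arguments comult {k} p q r g.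
Arguments counit {k} p g.
Arguments HP {k} m n E F.

(* Main.v *)
Require Import Defs.
From HB Require Import structures.
From mathcomp Require Import all_boot all_algebra.
From mathcomp Require Import boolp.
From Stdlib Require Import ClassicalEpsilon.

Set Implicit Arguments.
Unset Strict Implicit.
Unset Printing Implicit Defensive.
Import GRing.Theory.
Local Open Scope ring_scope.


Section Quot.
Variable k : fieldType.
Variable X : Type.
Variable R : @term k X -> @term k X -> Prop.

Notation T := (@term k X).
Definition canon (t : T) : T := epsilon (inhabits t) (teq R t).

Lemma canon_spec t : teq R t (canon t).
Proof. exact: (epsilon_spec (inhabits t) (teq R t) (ex_intro _ t (teq_refl _ _))). Qed.

Lemma canon_eq t t' : teq R t t' -> canon t = canon t'.
Proof.
move=> h; rewrite /canon.
have -> : teq R t = teq R t'.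
  apply: functional_extensionality_dep => y; apply: propositional_extensionality.
  split => h'; [exact: teq_trans (teq_sym h) h' | exact: teq_trans h h'].
by rewrite (Prop_irrelevance (inhabits t) (inhabits t')).
Qed.

Definition Qt := {t : T | canon t = t}.
HB.instance Definition _ := gen_eqMixin Qt.
HB.instance Definition _ := gen_choiceMixin Qt.

Definition pi (t : T) : Qt := exist _ (canon t) (esym (canon_eq (canon_spec t))).
Definition repr (q : Qt) : T := proj1_sig q.

Lemma pi_eq a b : pi a = pi b <-> teq R a b.
Proof.
split.
  move=> h; have: canon a = canon b by move: h => /(congr1 (@proj1_sig _ _)).
  move=> e; apply: teq_trans (canon_spec a) _; rewrite e; exact: teq_sym (canon_spec b).
move=> h; rewrite /pi; move: (esym _) (esym _); rewrite (canon_eq h) => p1 p2.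
by rewrite (Prop_irrelevance p1 p2).
Qed.

Lemma reprK q : pi (repr q) = q.
Proof.
case: q => t ht; rewrite /pi /repr /=; move: (esym _); rewrite ht => p.
by rewrite (Prop_irrelevance p ht).
Qed.

Lemma pi_repr t : teq R (repr (pi t)) t.
Proof. exact: teq_sym (canon_spec t). Qed.

Definition qadd (q1 q2 : Qt) : Qt := pi (tadd (repr q1) (repr q2)).
Definition qmul (q1 q2 : Qt) : Qt := pi (tmul (repr q1) (repr q2)).
Definition qopp (q : Qt) : Qt := pi (tmul (tscal _ (-1 : k)) (repr q)).
Definition qzero : Qt := pi (tscal _ 0).
Definition qone : Qt := pi (tscal _ 1).

Lemma qaddE a b : qadd (pi a) (pi b) = pi (tadd a b).
Proof. by apply/pi_eq; apply: teq_add; apply: pi_repr. Qed.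
Lemma qmulE a b : qmul (pi a) (pi b) = pi (tmul a b).
Proof. by apply/pi_eq; apply: teq_mul; apply: pi_repr. Qed.
Lemma qoppE a : qopp (pi a) = pi (tmul (tscal _ (-1 : k)) a).
Proof. by apply/pi_eq; apply: teq_mul; [apply: teq_refl| apply: pi_repr]. Qed.

Ltac qelim := do ?[let q := fresh "q" in move=> q;
  match type of q with Qt => rewrite -(reprK q); move: (repr q) => {q} | _ => revert q end; fail ];
  hnf; intros; repeat match goal with q : Qt |- _ => rewrite -(reprK q); move: (repr q) => {q} end; intros.

Lemma qaddA : associative qadd.
Proof. qelim; rewrite !qaddE; apply/pi_eq; exact: teq_addA. Qed.
Lemma qaddC : commutative qadd.
Proof. qelim; rewrite !qaddE; apply/pi_eq; exact: teq_addC. Qed.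
Lemma qadd0 : left_id qzero qadd.
Proof. qelim; rewrite !qaddE; apply/pi_eq; exact: teq_add0. Qed.
Lemma qaddN : left_inverse qzero qopp qadd.
Proof. qelim; rewrite qoppE qaddE; apply/pi_eq.
apply: teq_trans (teq_addC _ _ _) _; exact: teq_addN. Qed.
Lemma qmulA : associative qmul.
Proof. qelim; rewrite !qmulE; apply/pi_eq; exact: teq_mulA. Qed.
Lemma qmul1 : left_id qone qmul.
Proof. qelim; rewrite !qmulE; apply/pi_eq; exact: teq_mul1l. Qed.
Lemma qmulr1 : right_id qone qmul.
Proof. qelim; rewrite !qmulE; apply/pi_eq; exact: teq_mul1r. Qed.
Lemma qmulDl : left_distributive qmul qadd.
Proof. qelim; rewrite ?qaddE ?qmulE ?qaddE; apply/pi_eq.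
apply: teq_trans (teq_mulDl _ _ _ _) _; apply: teq_add; apply: teq_mul; apply: teq_sym; apply: pi_repr. Qed.
Lemma qmulDr : right_distributive qmul qadd.
Proof. qelim; rewrite ?qaddE ?qmulE ?qaddE; apply/pi_eq.
apply: teq_trans (teq_mulDr _ _ _ _) _; apply: teq_add; apply: teq_mul; apply: teq_sym; apply: pi_repr. Qed.

HB.instance Definition _ := GRing.isPzRing.Build Qt qaddA qaddC qadd0 qaddN qmulA qmul1 qmulr1 qmulDl qmulDr.

Lemma piD a b : pi (tadd a b) = pi a + pi b. Proof. by rewrite -qaddE. Qed.
Lemma piM a b : pi (tmul a b) = pi a * pi b. Proof. by rewrite -qmulE. Qed.
Definition sc (c : k) : Qt := pi (tscal _ c).
Lemma sc0 : sc 0 = 0. Proof. by []. Qed.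
Lemma sc1 : sc 1 = 1. Proof. by []. Qed.
Lemma scD a b : sc (a + b) = sc a + sc b.
Proof. by rewrite /sc -piD; apply/pi_eq; apply: teq_sym; apply: teq_scalD. Qed.
Lemma scM a b : sc (a * b) = sc a * sc b.
Proof. by rewrite /sc -piM; apply/pi_eq; apply: teq_sym; apply: teq_scalM. Qed.
Lemma scC c q : sc c * q = q * sc c.
Proof. rewrite -(reprK q) /sc -!piM; apply/pi_eq; exact: teq_scalC. Qed.
Lemma scN c : sc (- c) = - sc c.
Proof. by apply/eqP; rewrite -subr_eq0 opprK -scD addNr sc0. Qed.
Lemma sc_nat (b : nat) : sc b%:R = b%:R.
Proof. elim: b => [|b IH]; first by rewrite sc0. by rewrite !mulrS scD IH sc1. Qed.

End Quot.

Section Gen.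
Variable k : fieldType.
Local Notation term := (@term k).
Local Notation pres := (@pres k).

Definition QP (P : pres) := Qt (@rels k P).
Definition piP (P : pres) : term (gens P) -> QP P := @pi k _ (@rels k P).

Lemma peqP (P : pres) a b : peq P a b <-> piP a = piP b.
Proof. by rewrite /piP pi_eq. Qed.

Lemma subst_sum X Y (f : X -> term Y) p (g : 'I_p -> term X) :
  subst f (tsum g) = tsum (fun l => subst f (g l)).
Proof. by rewrite /tsum (big_morph (subst f) (id1 := tscal _ 0) (op1 := @tadd _ _)). Qed.

Lemma pi_sum X (R : term X -> term X -> Prop) p (g : 'I_p -> term X) :
  pi R (tsum g) = \sum_l pi R (g l).
Proof. by rewrite /tsum (big_morph (pi R) (@piD _ _ _) (erefl (pi R (tscal _ 0)))). Qed.

Lemma pi_kron X (R : term X -> term X -> Prop) (i j : nat) :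
  pi R (tkron X i j) = (i == j)%:R.
Proof. exact: (sc_nat R (i == j)). Qed.

Lemma pi_scal X (R : term X -> term X -> Prop) c : pi R (tscal X c) = sc R c.
Proof. by []. Qed.

Lemma teq_subst X Y (R : term X -> term X -> Prop) (R' : term Y -> term Y -> Prop)
  (f : X -> term Y) :
  (forall a b, R a b -> teq R' (subst f a) (subst f b)) ->
  forall a b, teq R a b -> teq R' (subst f a) (subst f b).
Proof.
move=> hR a b hab; induction hab; simpl; try by constructor.
- exact: hR.
- exact: teq_trans IHhab1 IHhab2.
Qed.

Lemma hom_peq (P Q : pres) (f : ahom P Q) : is_hom f ->
  forall a b, peq P a b -> peq Q (subst f a) (subst f b).
Proof. move=> h a b; exact: teq_subst. Qed.

Lemma heq_gen (P Q : pres) (f g : ahom P Q) :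
  (forall x, peq Q (f x) (g x)) -> heq f g.
Proof.
move=> h t; induction t as [x|c|t1 IH1 t2 IH2|t1 IH1 t2 IH2]; simpl; try by constructor.
exact: h.
Qed.

Lemma heq_genP (P Q : pres) (f g : ahom P Q) :
  (forall x, piP (f x) = piP (g x)) -> heq f g.
Proof. by move=> h; apply: heq_gen => x; apply/peqP. Qed.

End Gen.

Section Mx.
Variable k : fieldType.
Variable Rg : pzRingType.
Variable s : k -> Rg.
Hypothesis sD : forall a b, s (a + b) = s a + s b.
Hypothesis sM : forall a b, s (a * b) = s a * s b.
Hypothesis s1 : s 1 = 1.
Hypothesis sC : forall c x, s c * x = x * s c.

Lemma s0 : s 0 = 0.
Proof. by apply/eqP; rewrite -(subrr (s 0)) -{2}(addr0 0) sD addrK. Qed.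

Lemma s_nat (b : nat) : s b%:R = b%:R.
Proof. elim: b => [|b IH]; first by rewrite s0. by rewrite !mulrS sD IH s1. Qed.

Lemma s_sum I (r : seq I) (P : pred I) (f : I -> k) :
  s (\sum_(i <- r | P i) f i) = \sum_(i <- r | P i) s (f i).
Proof. exact: (big_morph s sD s0). Qed.

Definition M m n (A : 'M[k]_(m, n)) : 'M[Rg]_(m, n) := map_mx s A.

Lemma M_mul m n p (A : 'M[k]_(m, n)) (B : 'M[k]_(n, p)) : M A *m M B = M (A *m B).
Proof.
apply/matrixP => i j; rewrite !mxE s_sum; apply: eq_bigr => l _; by rewrite !mxE sM.
Qed.

Lemma M1 n : M (1%:M : 'M[k]_n) = 1%:M.
Proof. apply/matrixP => i j; by rewrite !mxE s_nat. Qed.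

Lemma trmx_mulC m n p (X : 'M[Rg]_(m, n)) (Y : 'M[Rg]_(n, p)) :
  (forall i l j, GRing.comm (X i l) (Y l j)) -> (X *m Y)^T = Y^T *m X^T.
Proof.
move=> h; apply/matrixP => i j; rewrite !mxE; apply: eq_bigr => l _; rewrite !mxE.
exact: h.
Qed.

Definition Rel p r (A : 'M[k]_p) (C : 'M[k]_r) (U V : 'M[Rg]_(p, r)) : Prop :=
  [/\ U *m V^T = 1%:M, V *m M C *m U^T *m M (invmx A) = 1%:M,
      V^T *m U = 1%:M & M C *m U^T *m M (invmx A) *m V = 1%:M].

Lemma Rel_comp p q r (A : 'M[k]_p) (B : 'M[k]_q) (C : 'M[k]_r)
  (U1 V1 : 'M[Rg]_(p, q)) (U2 V2 : 'M[Rg]_(q, r)) :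
  B \in unitmx ->
  (forall i j a b, [/\ GRing.comm (U1 i j) (U2 a b), GRing.comm (U1 i j) (V2 a b),
                      GRing.comm (V1 i j) (U2 a b) & GRing.comm (V1 i j) (V2 a b)]) ->
  Rel A B U1 V1 -> Rel B C U2 V2 -> Rel A C (U1 *m U2) (V1 *m V2).
Proof.
move=> hB hc [h11 h12 h13 h14] [h21 h22 h23 h24].
have tU : (U1 *m U2)^T = U2^T *m U1^T by apply: trmx_mulC => i l j; case: (hc i l l j).
have tV : (V1 *m V2)^T = V2^T *m V1^T by apply: trmx_mulC => i l j; case: (hc i l l j).
have MBi : M (invmx B) *m M B = 1%:M by rewrite M_mul mulVmx // M1.
have MBi' : M B *m M (invmx B) = 1%:M by rewrite M_mul mulmxV // M1.
have e2 : V2 *m M C *m U2^T = M B.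
  by rewrite -[LHS]mulmx1 -MBi !mulmxA h22 mul1mx.
have e4 : U1^T *m M (invmx A) *m V1 = M (invmx B).
  by rewrite -[RHS]mulmx1 -h14 !mulmxA MBi mul1mx.
split.
- by rewrite tV mulmxA -(mulmxA U1) h21 mulmx1 h11.
- by rewrite tU -!mulmxA (mulmxA V2) (mulmxA (V2 *m _)) e2 !mulmxA h12.
- by rewrite tV -mulmxA (mulmxA V1^T) h13 mul1mx h23.
- by rewrite tU !mulmxA -(mulmxA _ U1^T) -(mulmxA _ _ V1) e4 h24.
Qed.

End Mx.

Section Interp.
Variable k : fieldType.
Local Notation term := (@term k).

Fixpoint interp X (Rg : pzRingType) (s : k -> Rg) (g : X -> Rg) (t : term X) : Rg :=
  match t with
  | tgen x => g x
  | tscal c => s c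
  | tadd a b => interp s g a + interp s g b
  | tmul a b => interp s g a * interp s g b
  end.

Lemma interp_sum X (Rg : pzRingType) (s : k -> Rg) (g : X -> Rg) (s0 : s 0 = 0) p (h : 'I_p -> term X) :
  interp s g (tsum h) = \sum_l interp s g (h l).
Proof. by rewrite /tsum (big_morph (interp s g) (fun a b => erefl) (s0 : interp s g (tscal X 0) = 0)). Qed.

Lemma pi_subst X Y (R' : term Y -> term Y -> Prop) (f : X -> term Y) t :
  pi R' (subst f t) = interp (sc R') (fun x => pi R' (f x)) t.
Proof. by elim: t => //= a IHa b IHb; rewrite ?piD ?piM IHa IHb. Qed.

Lemma sum3 (Rg : pzRingType) n1 n2 n3 (x : 'I_n1 -> 'I_n2 -> Rg) (y : 'I_n2 -> 'I_n3 -> Rg) (z : 'I_n3 -> Rg) :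
  \sum_c (\sum_b (\sum_a x a b) * y b c) * z c = \sum_a \sum_b \sum_c (x a b * y b c) * z c.
Proof.
under eq_bigr => c _ do rewrite mulr_suml.
under eq_bigr => c _ do under eq_bigr => b _ do rewrite !mulr_suml.
under eq_bigr => c _ do rewrite exchange_big.
rewrite exchange_big.
by under eq_bigr => a _ do rewrite exchange_big.
Qed.

End Interp.

Section Exprs.
Variable k : fieldType.
Variables (p r : nat) (A : 'M[k]_p) (C : 'M[k]_r) (Rg : pzRingType) (s : k -> Rg).
Hypothesis s0 : s 0 = 0.
Hypothesis snat : forall b : bool, s b%:R = b%:R.
Variable g : gen p r -> Rg.
Definition Ug : 'M[Rg]_(p, r) := \matrix_(i, j) g (GU i j).
Definition Vg : 'M[Rg]_(p, r) := \matrix_(i, j) g (GV i j).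

Lemma mx3E n1 n2 n3 n4 n5 (X : 'M[Rg]_(n1, n2)) (Y : 'M[Rg]_(n2, n3)) (Z : 'M[Rg]_(n3, n4))
  (W : 'M[Rg]_(n4, n5)) i j :
  (X *m Y *m Z *m W) i j = \sum_c (\sum_b (\sum_a X i a * Y a b) * Z b c) * W c j.
Proof.
rewrite !mxE; apply: eq_bigr => c _; rewrite !mxE; congr (_ * _).
apply: eq_bigr => b _; by rewrite !mxE.
Qed.

Lemma Rel_iff :
  (forall a b, HEF_rel A C a b -> interp s g a = interp s g b) <-> Rel s A C Ug Vg.
Proof.
have e1 i j : interp s g (tsum (fun l : 'I_r => tmul (tgen (GU i l)) (tgen (GV j l))))
   = (Ug *m Vg^T) i j.
  rewrite interp_sum // !mxE; apply: eq_bigr => l _; by rewrite /= !mxE.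
have e3 i j : interp s g (tsum (fun l : 'I_p => tmul (tgen (GV l i)) (tgen (GU l j))))
   = (Vg^T *m Ug) i j.
  rewrite interp_sum // !mxE; apply: eq_bigr => l _; by rewrite /= !mxE.
have e2 i j : interp s g
      (tsum (fun a : 'I_r => tsum (fun b : 'I_r => tsum (fun c : 'I_p =>
         tmul (tmul (tmul (tgen (GV i a)) (tscal _ (C a b))) (tgen (GU c b)))
              (tscal _ (invmx A c j))))))
   = (Vg *m M s C *m Ug^T *m M s (invmx A)) i j.
  rewrite interp_sum //; under eq_bigr => a _ do rewrite interp_sum //.
  under eq_bigr => a _ do under eq_bigr => b _ do rewrite interp_sum //.
  rewrite mx3E sum3; apply: eq_bigr => a _; apply: eq_bigr => b _; apply: eq_bigr => c _.
  by rewrite /= !mxE.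
have e4 i j : interp s g
      (tsum (fun a : 'I_r => tsum (fun b : 'I_p => tsum (fun c : 'I_p =>
         tmul (tmul (tmul (tscal _ (C i a)) (tgen (GU b a))) (tscal _ (invmx A b c)))
              (tgen (GV c j))))))
   = (M s C *m Ug^T *m M s (invmx A) *m Vg) i j.
  rewrite interp_sum //; under eq_bigr => a _ do rewrite interp_sum //.
  under eq_bigr => a _ do under eq_bigr => b _ do rewrite interp_sum //.
  rewrite mx3E sum3; apply: eq_bigr => a _; apply: eq_bigr => b _; apply: eq_bigr => c _.
  by rewrite /= !mxE.
have ek (n : nat) (i j : 'I_n) : interp s g (tkron _ i j) = (1%:M : 'M[Rg]_n) i j.
  by rewrite /= snat mxE.
split.
- move=> h; split; apply/matrixP => i j; rewrite -ek.
  + by rewrite -e1; apply: h; constructor.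
  + by rewrite -e2; apply: h; constructor.
  + by rewrite -e3; apply: h; constructor.
  + by rewrite -e4; apply: h; constructor.
- case=> h1 h2 h3 h4 a b [] i j; rewrite ek.
  + by rewrite e1 h1.
  + by rewrite e2 h2.
  + by rewrite e3 h3.
  + by rewrite e4 h4.
Qed.

End Exprs.

Section Hom.
Variable k : fieldType.
Local Notation term := (@term k).
Local Notation pres := (@pres k).

Lemma hom_Rel p r (A : 'M[k]_p) (C : 'M[k]_r) (Q : pres) (f : ahom (HP p r A C) Q) :
  is_hom f <-> Rel (sc (@rels k Q)) A C (Ug (fun x => piP (f x))) (Vg (fun x => piP (f x))).
Proof.
rewrite -Rel_iff //; last exact: sc_nat.
split=> h a b hab.
- by rewrite -!pi_subst; apply/peqP; apply: h.
- by apply/peqP; rewrite /piP !pi_subst; apply: h.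
Qed.

Lemma sc_mor X (R : term X -> term X -> Prop) :
  [/\ forall a b, sc R (a + b) = sc R a + sc R b,
      forall a b, sc R (a * b) = sc R a * sc R b & sc R 1 = 1].
Proof. split; [exact: scD | exact: scM | exact: sc1]. Qed.

Lemma comult_hom p q r (A : 'M[k]_p) (B : 'M[k]_q) (C : 'M[k]_r) : B \in unitmx ->
  is_hom (comult p q r : ahom (HP p r A C) (tens (HP p q A B) (HP q r B C))).
Proof.
move=> hB.
set T := tens (HP p q A B) (HP q r B C).
pose U1 := Ug (fun x : gen p q => piP (tgen (inl x) : term (gens T))).
pose V1 := Vg (fun x : gen p q => piP (tgen (inl x) : term (gens T))).
pose U2 := Ug (fun x : gen q r => piP (tgen (inr x) : term (gens T))).
pose V2 := Vg (fun x : gen q r => piP (tgen (inr x) : term (gens T))).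
have R1 : Rel (sc (@rels k T)) A B U1 V1.
  apply/(@hom_Rel p q A B T (fun x : gen p q => tgen (inl x))) => a b hab.
  exact: (@teq_rel _ _ _ _ _ (@tr_l _ (HP p q A B) (HP q r B C) _ _ hab)).
have R2 : Rel (sc (@rels k T)) B C U2 V2.
  apply/(@hom_Rel q r B C T (fun x : gen q r => tgen (inr x))) => a b hab.
  exact: (@teq_rel _ _ _ _ _ (@tr_r _ (HP p q A B) (HP q r B C) _ _ hab)).
have cm (x : gen p q) (y : gen q r) :
    GRing.comm (piP (tgen (inl x) : term (gens T))) (piP (tgen (inr y) : term (gens T))).
  by rewrite /GRing.comm /piP -!piM; apply/pi_eq; apply: teq_rel; apply: tr_comm.
have := Rel_comp (@scD _ _ _) (@scM _ _ _) (@sc1 _ _ _) hB _ R1 R2.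
move=> /(_ _) RC; apply/hom_Rel.
have -> : Ug (fun x => piP (comult p q r x : term (gens T))) = U1 *m U2.
  apply/matrixP => i j; rewrite !mxE /piP /= pi_sum; apply: eq_bigr => l _.
  by rewrite piM !mxE.
have -> : Vg (fun x => piP (comult p q r x : term (gens T))) = V1 *m V2.
  apply/matrixP => i j; rewrite !mxE /piP /= pi_sum; apply: eq_bigr => l _.
  by rewrite piM !mxE.
apply: RC => i j a b; rewrite !mxE; split; exact: cm.
Qed.

End Hom.

Section Coass.
Variable k : fieldType.
Local Notation term := (@term k).
Local Notation pres := (@pres k).

Lemma sum_assoc (R : pzRingType) n1 n2 (x : 'I_n1 -> R) (y : 'I_n1 -> 'I_n2 -> R) (z : 'I_n2 -> R) :
  \sum_l (\sum_l0 x l0 * y l0 l) * z l = \sum_l0 x l0 * \sum_l y l0 l * z l.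
Proof.
under eq_bigr => l _ do rewrite mulr_suml.
rewrite exchange_big; apply: eq_bigr => l0 _; rewrite mulr_sumr.
by apply: eq_bigr => l _; rewrite mulrA.
Qed.

Lemma coassoc p q r s (Ma : 'M[k]_p) (Mb : 'M[k]_q) (Mc : 'M[k]_r) (Md : 'M[k]_s) :
  heq (Defs.comp (Defs.comp (comult p q s : ahom (HP p s Ma Md) (tens (HP p q Ma Mb) (HP q s Mb Md)))
                  (tensh (comult p r q : ahom (HP p q Ma Mb) (tens (HP p r Ma Mc) (HP r q Mc Mb)))
                         (idh (HP q s Mb Md))))
            (@assoc _ (HP p r Ma Mc) (HP r q Mc Mb) (HP q s Mb Md)))
      (Defs.comp (comult p r s : ahom (HP p s Ma Md) (tens (HP p r Ma Mc) (HP r s Mc Md)))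
            (tensh (idh (HP p r Ma Mc))
                   (comult r q s : ahom (HP r s Mc Md) (tens (HP r q Mc Mb) (HP q s Mb Md))))).
Proof.
apply: heq_genP => -[] i j; rewrite /Defs.comp /piP /= !subst_sum !pi_sum.
all: rewrite /=.
all: under eq_bigr => l _ do rewrite piM /tmap !subst_sum !pi_sum /=.
all: symmetry; under eq_bigr => l _ do rewrite piM /tmap !subst_sum !pi_sum /=.
all: under eq_bigr => l _ do under eq_bigr => l0 _ do rewrite piM.
all: symmetry; under eq_bigr => l _ do under eq_bigr => l0 _ do rewrite piM.
all: exact: sum_assoc.
Qed.
End Coass.

Section Counit.
Variable k : fieldType.
Local Notation term := (@term k).
Local Notation pres := (@pres k).

Lemma sum_deltal (R : pzRingType) n (i : 'I_n) (y : 'I_n -> R) :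
  \sum_l (i == l)%:R * y l = y i.
Proof.
rewrite (bigD1 i) //= eqxx mul1r big1 ?addr0 // => l /negbTE ne.
by rewrite eq_sym ne mul0r.
Qed.

Lemma sum_deltar (R : pzRingType) n (j : 'I_n) (y : 'I_n -> R) :
  \sum_l y l * (l == j)%:R = y j.
Proof.
rewrite (bigD1 j) //= eqxx mulr1 big1 ?addr0 // => l /negbTE ne.
by rewrite ne mulr0.
Qed.

Lemma counit_l p s (Ma : 'M[k]_p) (Md : 'M[k]_s) :
  heq (Defs.comp (comult p p s : ahom (HP p s Ma Md) (tens (HP p p Ma Ma) (HP p s Ma Md)))
         (tensh (counit p : ahom (HP p p Ma Ma) kP) (idh (HP p s Ma Md))))
      (@lunit _ (HP p s Ma Md)).
Proof.
apply: heq_genP => -[] i j; rewrite /Defs.comp /piP /= !subst_sum !pi_sum /=.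
all: under eq_bigr => l _ do rewrite piM pi_scal sc_nat.
all: exact: sum_deltal.
Qed.

Lemma counit_r p s (Ma : 'M[k]_p) (Md : 'M[k]_s) :
  heq (Defs.comp (comult p s s : ahom (HP p s Ma Md) (tens (HP p s Ma Md) (HP s s Md Md)))
         (tensh (idh (HP p s Ma Md)) (counit s : ahom (HP s s Md Md) kP)))
      (@runit _ (HP p s Ma Md)).
Proof.
apply: heq_genP => -[] i j; rewrite /Defs.comp /piP /= !subst_sum !pi_sum /=.
all: under eq_bigr => l _ do rewrite piM pi_scal sc_nat.
all: exact: sum_deltar.
Qed.

Lemma counit_hom p (Ma : 'M[k]_p) : Ma \in unitmx ->
  is_hom (counit p : ahom (HP p p Ma Ma) kP).
Proof.
move=> hM; apply/hom_Rel.
have eU : Ug (fun x => piP (counit p x : term (gens (@kP k)))) = 1%:M.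
  by apply/matrixP => i j; rewrite !mxE /piP pi_kron.
have eV : Vg (fun x => piP (counit p x : term (gens (@kP k)))) = 1%:M.
  by apply/matrixP => i j; rewrite !mxE /piP pi_kron.
have MM := M_mul (@scD _ _ _) (@scM _ _ _).
have M1' := M1 (@scD _ _ _) (@sc1 _ _ _).
rewrite eU eV /Rel trmx1; split; rewrite ?mulmx1 ?mul1mx //.
- by rewrite MM mulmxV // M1'.
- by rewrite MM mulmxV // M1'.
Qed.

End Counit.

Section Anti.
Variable k : fieldType.
Local Notation term := (@term k).
Local Notation pres := (@pres k).
Variables (m n : nat) (E : 'M[k]_m) (F : 'M[k]_n).
Hypotheses (hE : E \in unitmx) (hF : F \in unitmx).

Local Notation Z := (HP m n E F).
Local Notation T := (HP n m F E).
Local Notation QZ := (QP Z).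
Local Notation piZ := (@piP k Z).
Local Notation s := (sc (@rels k Z)).

Definition Xt (x : 'I_n) (y : 'I_m) : term (gen m n) :=
  tsum (fun b : 'I_n => tsum (fun c : 'I_m =>
    tmul (tmul (tscal _ (F x b)) (tgen (GU c b))) (tscal _ (invmx E c y)))).

Definition Sgen (g : gen n m) : term (gen m n) :=
  match g with
  | GU x y => tgen (GV y x)
  | GV x y => Xt x y
  end.

Fixpoint Santi (t : term (gen n m)) : term (gen m n) :=
  match t with
  | tgen g => Sgen g
  | tscal c => tscal _ c
  | tadd a b => tadd (Santi a) (Santi b)
  | tmul a b => tmul (Santi b) (Santi a)
  end.

Definition Sq (t : term (gen n m)) : QZ := piZ (Santi t).

Definition UZ : 'M[QZ]_(m, n) := Ug (fun x => piZ (tgen x)).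
Definition VZ : 'M[QZ]_(m, n) := Vg (fun x => piZ (tgen x)).
Definition XZ : 'M[QZ]_(n, m) := M s F *m UZ^T *m M s (invmx E).

Lemma subst_tgen X (t : term X) : subst (fun x => tgen x) t = t.
Proof. by elim: t => //= a -> b ->. Qed.

Lemma RelZ : Rel s E F UZ VZ.
Proof.
apply/(@hom_Rel k m n E F Z (fun x => tgen x)) => a b hab.
by rewrite /peq !subst_tgen; apply: teq_rel.
Qed.

Lemma mx2E n1 n2 n3 n4 (A : 'M[QZ]_(n1, n2)) (B : 'M[QZ]_(n2, n3)) (C : 'M[QZ]_(n3, n4)) i j :
  (A *m B *m C) i j = \sum_a \sum_b (A i a * B a b) * C b j.
Proof.
rewrite mxE; under eq_bigr => c _ do rewrite mxE mulr_suml.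
by rewrite exchange_big.
Qed.

Lemma SqX x y : Sq (tgen (GV x y)) = XZ x y.
Proof.
rewrite /Sq /= /Xt /piP pi_sum mx2E; apply: eq_bigr => b _.
rewrite pi_sum; apply: eq_bigr => c _; by rewrite !piM !mxE.
Qed.

Lemma SqU x y : Sq (tgen (GU x y)) = VZ y x.
Proof. by rewrite /Sq /= mxE. Qed.

Lemma scC' c (q : QZ) : s c * q = q * s c.
Proof. exact: scC. Qed.

Lemma XT : XZ^T = M s (invmx E)^T *m UZ *m M s F^T.
Proof.
rewrite /XZ trmx_mulC; last by move=> i l j; rewrite /GRing.comm [M s _ _ _]mxE; exact/esym/scC'.
rewrite trmx_mulC; last by move=> i l j; rewrite /GRing.comm [M s _ _ _]mxE; exact/scC'.
by rewrite trmxK !map_trmx mulmxA.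
Qed.


Lemma Santi_sum p (f : 'I_p -> term (gen n m)) : Santi (tsum f) = tsum (fun l => Santi (f l)).
Proof. by rewrite /tsum (big_morph Santi (id1 := tscal _ 0) (op1 := @tadd _ _)). Qed.

Lemma sum_rev3 (R : pzRingType) n1 n2 n3 (f : 'I_n1 -> 'I_n2 -> 'I_n3 -> R) :
  \sum_a \sum_b \sum_c f a b c = \sum_c \sum_b \sum_a f a b c.
Proof.
under eq_bigr => a _ do rewrite exchange_big.
rewrite exchange_big; under eq_bigr => b _ do rewrite exchange_big.
by rewrite exchange_big.
Qed.

Lemma piX x y : pi (HEF_rel E F) (Xt x y) = XZ x y.
Proof. exact: SqX. Qed.
Lemma piV x y : pi (HEF_rel E F) (tgen (GV x y)) = VZ x y.
Proof. by rewrite mxE. Qed.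
Lemma piU x y : pi (HEF_rel E F) (tgen (GU x y)) = UZ x y.
Proof. by rewrite mxE. Qed.

Lemma S_rel t1 t2 : @rels k T t1 t2 -> Sq t1 = Sq t2.
Proof.
have MM := M_mul (@scD _ _ _) (@scM _ _ _).
have M1' := M1 (@scD _ _ _) (@sc1 _ _ _).
case: RelZ => h1 h2 h3 h4.
case=> i j; rewrite /Sq /= ?Santi_sum /piP pi_kron ?pi_sum.
- under eq_bigr => l _ do rewrite /= piM piX piV.
  have h4' : XZ *m VZ = 1%:M by rewrite /XZ h4.
  by move/matrixP: h4' => /(_ j i); rewrite !mxE eq_sym => <-.
- under eq_bigr => a _ do rewrite Santi_sum pi_sum.
  under eq_bigr => a _ do under eq_bigr => b _ do rewrite Santi_sum pi_sum.
  under eq_bigr => a _ do under eq_bigr => b _ do under eq_bigr => c _ do rewrite /= !piM ?piX ?piV ?piU !pi_scal.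
  rewrite sum_rev3.
  have e : M s (invmx F)^T *m VZ^T *m M s E^T *m XZ^T = 1%:M.
    rewrite XT !mulmxA -(mulmxA _ (M s E^T)) MM -trmx_mul mulVmx // trmx1 M1' mulmx1.
    by rewrite -(mulmxA _ VZ^T) h3 mulmx1 MM -trmx_mul mulmxV // trmx1 M1'.
  move/matrixP: e => /(_ j i); rewrite mx3E sum3 mxE eq_sym => <-.
  apply: eq_bigr => c _; apply: eq_bigr => b _; apply: eq_bigr => a _.
  by rewrite /M !mxE !mulrA.
- under eq_bigr => l _ do rewrite /= piM piX piV.
  have h2' : VZ *m XZ = 1%:M by rewrite /XZ !mulmxA h2.
  by move/matrixP: h2' => /(_ j i); rewrite !mxE eq_sym => <-.
- under eq_bigr => a _ do rewrite Santi_sum pi_sum.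
  under eq_bigr => a _ do under eq_bigr => b _ do rewrite Santi_sum pi_sum.
  under eq_bigr => a _ do under eq_bigr => b _ do under eq_bigr => c _ do rewrite /= !piM ?piX ?piV ?piU !pi_scal.
  rewrite sum_rev3.
  have e : XZ^T *m M s (invmx F)^T *m VZ^T *m M s E^T = 1%:M.
    rewrite XT -!mulmxA (mulmxA (M s F^T)) MM -trmx_mul mulVmx // trmx1 M1' mul1mx.
    by rewrite (mulmxA UZ) h1 mul1mx MM -trmx_mul mulmxV // trmx1 M1'.
  move/matrixP: e => /(_ j i); rewrite mx3E sum3 mxE eq_sym => <-.
  apply: eq_bigr => c _; apply: eq_bigr => b _; apply: eq_bigr => a _.
  by rewrite /M !mxE !mulrA.
Qed.

Lemma SqD a b : Sq (tadd a b) = Sq a + Sq b. Proof. exact: piD. Qed.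
Lemma SqM a b : Sq (tmul a b) = Sq b * Sq a. Proof. exact: piM. Qed.
Lemma Sqs c : Sq (tscal _ c) = s c. Proof. by []. Qed.

Lemma S_resp a b : teq (@rels k T) a b -> Sq a = Sq b.
Proof.
elim=> {a b}; intros; rewrite ?SqD ?SqM ?Sqs //.
- exact: S_rel.
- by rewrite H0 H2.
- by rewrite H0 H2.
- by rewrite H0 H2.
- by rewrite addrA.
- by rewrite addrC.
- by rewrite sc0 add0r.
- by rewrite scN sc1 mulrN1 subrr sc0.
- by rewrite mulrA.
- by rewrite sc1 mulr1.
- by rewrite sc1 mul1r.
- by rewrite SqD mulrDr.
- by rewrite SqD mulrDl.
- by rewrite scD.
- by rewrite mulrC scM.
- by rewrite scC'.
Qed.
End Anti.

Section Phi.
Variable k : fieldType.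
Local Notation term := (@term k).
Local Notation pres := (@pres k).
Variables (m n : nat) (E : 'M[k]_m) (F : 'M[k]_n).
Hypotheses (hE : E \in unitmx) (hF : F \in unitmx).

Local Notation Z := (HP m n E F).
Local Notation T := (HP n m F E).
Local Notation QZ := (QP Z).
Local Notation piZ := (@piP k Z).
Local Notation s := (sc (@rels k Z)).
Local Notation Sq := (Sq E F).
Local Notation Santi := (Santi E F).

Fixpoint rho (t : term (gen m n + gen n m)) (x : QZ) : QZ :=
  match t with
  | tgen (inl g) => piZ (tgen g) * x
  | tgen (inr g) => x * Sq (tgen g)
  | tscal c => s c * x
  | tadd a b => rho a x + rho b x
  | tmul a b => rho a (rho b x)
  end.

Lemma rho_add t x y : rho t (x + y) = rho t x + rho t y.
Proof.
elim: t x y => [[g|g]|c|a IHa b IHb|a IHa b IHb] x y /=.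
- by rewrite mulrDr.
- by rewrite mulrDl.
- by rewrite mulrDr.
- by rewrite IHa IHb addrACA.
- by rewrite IHb IHa.
Qed.

Lemma rho_scal t c x : rho t (s c * x) = s c * rho t x.
Proof.
elim: t x => [[g|g]|c'|a IHa b IHb|a IHa b IHb] x /=.
- by rewrite mulrA -scC' mulrA.
- by rewrite mulrA.
- by rewrite !mulrA scC'.
- by rewrite IHa IHb mulrDr.
- by rewrite IHb IHa.
Qed.

Lemma rho_inl t x : rho (tmap inl t) x = piZ t * x.
Proof.
elim: t x => [g|c|a IHa b IHb|a IHa b IHb] x //=.
- by rewrite IHa IHb /piP piD mulrDl.
- by rewrite IHa IHb /piP piM mulrA.
Qed.

Lemma rho_inr t x : rho (tmap inr t) x = x * Sq t.
Proof.
elim: t x => [g|c|a IHa b IHb|a IHa b IHb] x //=.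
- by rewrite scC'.
- by rewrite IHa IHb SqD mulrDr.
- by rewrite IHa IHb SqM mulrA.
Qed.

Lemma rho_resp a b : teq (@rels k (tens Z T)) a b -> forall x, rho a x = rho b x.
Proof.
elim=> {a b}; intros; rewrite /= //.
- case: H => [a' b' h| a' b' h| g h] /=.
  + by rewrite !rho_inl; congr (_ * _); apply/peqP; apply: teq_rel.
  + by rewrite !rho_inr (S_resp hE hF (teq_rel h)).
  + by rewrite mulrA.
- by rewrite H0.
- by rewrite H0 H2.
- by rewrite H0 H2.
- by rewrite addrA.
- by rewrite addrC.
- by rewrite sc0 mul0r add0r.
- by rewrite scN sc1 mulN1r subrr sc0 mul0r.
- by rewrite sc1 mul1r.
- by rewrite sc1 mul1r.
- by rewrite rho_add.
- by rewrite scD mulrDl.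
- by rewrite scM mulrA.
- by rewrite rho_scal.
Qed.


Fixpoint rho' (t : term (gen n m + gen m n)) (x : QZ) : QZ :=
  match t with
  | tgen (inl g) => Sq (tgen g) * x
  | tgen (inr g) => x * piZ (tgen g)
  | tscal c => s c * x
  | tadd a b => rho' a x + rho' b x
  | tmul a b => rho' b (rho' a x)
  end.

Lemma rho'_add t x y : rho' t (x + y) = rho' t x + rho' t y.
Proof.
elim: t x y => [[g|g]|c|a IHa b IHb|a IHa b IHb] x y /=.
- by rewrite mulrDr.
- by rewrite mulrDl.
- by rewrite mulrDr.
- by rewrite IHa IHb addrACA.
- by rewrite IHa IHb.
Qed.

Lemma rho'_scal t c x : rho' t (s c * x) = s c * rho' t x.
Proof.
elim: t x => [[g|g]|c'|a IHa b IHb|a IHa b IHb] x /=.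
- by rewrite mulrA -scC' mulrA.
- by rewrite mulrA.
- by rewrite !mulrA scC'.
- by rewrite IHa IHb mulrDr.
- by rewrite IHa IHb.
Qed.

Lemma rho'_inl t x : rho' (tmap inl t) x = Sq t * x.
Proof.
elim: t x => [g|c|a IHa b IHb|a IHa b IHb] x //=.
- by rewrite IHa IHb SqD mulrDl.
- by rewrite IHa IHb SqM mulrA.
Qed.

Lemma rho'_inr t x : rho' (tmap inr t) x = x * piZ t.
Proof.
elim: t x => [g|c|a IHa b IHb|a IHa b IHb] x //=.
- by rewrite scC'.
- by rewrite IHa IHb /piP piD mulrDr.
- by rewrite IHa IHb /piP piM mulrA.
Qed.

Lemma rho'_resp a b : teq (@rels k (tens T Z)) a b -> forall x, rho' a x = rho' b x.
Proof.
elim=> {a b}; intros; rewrite /= //.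
- case: H => [a' b' h| a' b' h| g h] /=.
  + by rewrite !rho'_inl (S_resp hE hF (teq_rel h)).
  + by rewrite !rho'_inr; congr (_ * _); apply/peqP; apply: teq_rel.
  + by rewrite mulrA.
- by rewrite H0.
- by rewrite H0 H2.
- by rewrite H0 H2.
- by rewrite addrA.
- by rewrite addrC.
- by rewrite sc0 mul0r add0r.
- by rewrite rho'_scal scN sc1 mulN1r subrr sc0 mul0r.
- by rewrite sc1 mul1r.
- by rewrite sc1 mul1r.
- by rewrite rho'_add.
- by rewrite scD mulrDl.
- by rewrite mulrA -scM mulrC.
- by rewrite rho'_scal.
Qed.

End Phi.

Section Final4.
Variable k : fieldType.
Local Notation term := (@term k).
Local Notation pres := (@pres k).
Variables (m n : nat) (E : 'M[k]_m) (F : 'M[k]_n).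
Hypotheses (hE : E \in unitmx) (hF : F \in unitmx).

Local Notation Z := (HP m n E F).
Local Notation T := (HP n m F E).
Local Notation QZ := (QP Z).
Local Notation piZ := (@piP k Z).
Local Notation s := (sc (@rels k Z)).
Local Notation Sq := (Sq E F).
Local Notation Santi := (Santi E F).
Local Notation UZ := (UZ E F).
Local Notation VZ := (VZ E F).
Local Notation XZ := (XZ E F).
Local Notation rhoZ := (@rho k m n E F).
Local Notation rhoZ' := (@rho' k m n E F).

Definition evk (t : term Empty_set) : k :=
  interp (fun c : k => c) (fun e : Empty_set => match e with end) t.

Lemma pi_unith t : piZ (subst (@unith _ Z) t) = s (evk t).
Proof.
elim: t => [[]|c|a IHa b IHb|a IHa b IHb] //=.
- by rewrite /piP piD -!/(piP _) IHa IHb scD.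
- by rewrite /piP piM -!/(piP _) IHa IHb scM.
Qed.

Lemma subst_comp X Y W (f : X -> term Y) (g : Y -> term W) t :
  subst g (subst f t) = subst (fun x => subst g (f x)) t.
Proof. by elim: t => //= a -> b ->. Qed.

Lemma sum_sc (c : k) p (x y : 'I_p -> QZ) :
  \sum_l x l * (s c * y l) = s c * \sum_l x l * y l.
Proof. rewrite mulr_sumr; apply: eq_bigr => l _; by rewrite mulrA -scC' mulrA. Qed.

Lemma sum_sc' (c : k) p (x y : 'I_p -> QZ) :
  \sum_l (x l * s c) * y l = s c * \sum_l x l * y l.
Proof. rewrite mulr_sumr; apply: eq_bigr => l _; by rewrite -scC' !mulrA. Qed.

Lemma trE a b (A : 'M[QZ]_(a, b)) i j : A^T i j = A j i.
Proof. exact: mxE. Qed.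

Lemma rho_sum p (h : 'I_p -> term (gen m n + gen n m)) x :
  rhoZ (tsum h) x = \sum_l rhoZ (h l) x.
Proof.
rewrite /tsum (big_morph (fun t => rhoZ t x) (id1 := 0) (op1 := +%R)) //=.
by rewrite sc0 mul0r.
Qed.

Lemma rho'_sum p (h : 'I_p -> term (gen n m + gen m n)) x :
  rhoZ' (tsum h) x = \sum_l rhoZ' (h l) x.
Proof.
rewrite /tsum (big_morph (fun t => rhoZ' t x) (id1 := 0) (op1 := +%R)) //=.
by rewrite sc0 mul0r.
Qed.

Lemma rho_gamma (a : term (gen m m)) c :
  rhoZ (subst (comult m n m) a) (s c) = s (c * evk (subst (counit m) a)).
Proof.
case: (RelZ E F) => h1 h2 h3 h4.
elim: a c => [[] i j|c'|a IHa b IHb|a IHa b IHb] c /=.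
- rewrite rho_sum /=; under eq_bigr => l _ do rewrite SqU.
  rewrite /piP; under eq_bigr => l _ do rewrite piU.
  rewrite sum_sc scM sc_nat; congr (_ * _).
  transitivity ((UZ *m VZ^T) i j); first by rewrite mxE; symmetry; under eq_bigr => l _ do rewrite trE.
  by rewrite h1 mxE.
- rewrite rho_sum /=; under eq_bigr => l _ do rewrite SqX.
  rewrite /piP; under eq_bigr => l _ do rewrite piV.
  rewrite sum_sc scM sc_nat; congr (_ * _).
  have h2' : VZ *m XZ = 1%:M by rewrite /XZ !mulmxA h2.
  transitivity ((VZ *m XZ) i j); first by rewrite mxE.
  by rewrite h2' mxE.
- by rewrite -scM mulrC.
- by rewrite IHa IHb -scD mulrDr.
- by rewrite IHb IHa /= -mulrA [evk (subst _ b) * _]mulrC.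
Qed.

Lemma rho'_delta (a : term (gen n n)) c :
  rhoZ' (subst (comult n m n) a) (s c) = s (c * evk (subst (counit n) a)).
Proof.
case: (RelZ E F) => h1 h2 h3 h4.
elim: a c => [[] i j|c'|a IHa b IHb|a IHa b IHb] c /=.
- rewrite rho'_sum /=; under eq_bigr => l _ do rewrite SqU.
  rewrite /piP; under eq_bigr => l _ do rewrite piU.
  rewrite sum_sc' scM sc_nat; congr (_ * _).
  transitivity ((VZ^T *m UZ) i j); first by rewrite mxE; symmetry; under eq_bigr => l _ do rewrite trE.
  by rewrite h3 mxE.
- rewrite rho'_sum /=; under eq_bigr => l _ do rewrite SqX.
  rewrite /piP; under eq_bigr => l _ do rewrite piV.
  rewrite sum_sc' scM sc_nat; congr (_ * _).
  have h4' : XZ *m VZ = 1%:M by rewrite /XZ h4.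
  transitivity ((XZ *m VZ) i j); first by rewrite mxE.
  by rewrite h4' mxE.
- by rewrite -scM mulrC.
- by rewrite IHa IHb -scD mulrDr.
- by rewrite IHa IHb mulrA.
Qed.

End Final4.

Lemma heq_sym (k : fieldType) (P Q : @pres k) (f g : ahom P Q) : heq f g -> heq g f.
Proof. move=> h t; exact: (teq_sym (h t)). Qed.

Theorem proposition4p3 (k : fieldType) (m n : nat) (E : 'M[k]_m) (F : 'M[k]_n)
  (hE : E \in unitmx) (hF : F \in unitmx) (hEF : nonzero (HP m n E F)) :
  hopf_galois_system (HP m m E E) (HP n n F F) (HP m n E F) (HP n m F E)
    (comult m m m : ahom (HP m m E E) (tens (HP m m E E) (HP m m E E)))
    (counit m : ahom (HP m m E E) kP)
    (comult n n n : ahom (HP n n F F) (tens (HP n n F F) (HP n n F F)))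
    (counit n : ahom (HP n n F F) kP)
    (comult m m n : ahom (HP m n E F) (tens (HP m m E E) (HP m n E F)))
    (comult m n n : ahom (HP m n E F) (tens (HP m n E F) (HP n n F F)))
    (comult m n m : ahom (HP m m E E) (tens (HP m n E F) (HP n m F E)))
    (comult n m n : ahom (HP n n F F) (tens (HP n m F E) (HP m n E F))).
Proof.
have gam_hom := @comult_hom k m n m E F E hF.
have del_hom := @comult_hom k n m n F E F hE.
have s10 : sc (@rels k (HP m n E F)) 1 <> sc (@rels k (HP m n E F)) 0.
  by move=> h; apply: hEF; apply/peqP.
split.
- split=> //.
  + move=> h; apply: s10.
    have := rho_resp hE hF (hom_peq gam_hom h) 1; rewrite /= => e.
    by rewrite -[LHS]mulr1 -[RHS]mulr1.
  + move=> h; apply: s10.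
    have := rho'_resp hE hF (hom_peq del_hom h) 1; rewrite /= => e.
    by rewrite -[LHS]mulr1 -[RHS]mulr1.
  + by move=> h; apply: s10; have := S_resp hE hF h.
- split; split.
  + exact: comult_hom.
  + exact: counit_hom.
  + exact: coassoc.
  + exact: counit_l.
  + exact: counit_r.
  + exact: comult_hom.
  + exact: counit_hom.
  + exact: coassoc.
  + exact: counit_l.
  + exact: counit_r.
- split.
  + exact: comult_hom.
  + exact: comult_hom.
  + split; [exact: coassoc | exact: counit_l].
  + split; [exact: coassoc | exact: counit_r].
  + exact: coassoc.
- split=> //.
  + exact: coassoc.
  + exact: coassoc.
  + apply: heq_sym; exact: coassoc.
- exists (Santi E F); split.
  + split.
    * by move=> a b h; apply/peqP; apply: S_resp.
    * by move=> a b; apply: teq_refl.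
    * by move=> c a; apply: teq_sym; apply: teq_scalC.
  + exists (fun w => repr (@rho k m n E F w 1)); split.
    * split.
      -- by move=> a b h; apply/peqP; rewrite /piP !reprK; apply: (rho_resp hE hF).
      -- by move=> a b; apply/peqP; rewrite /piP piD !reprK.
      -- by move=> c a; apply/peqP; rewrite /piP piM !reprK.
    * move=> z t; apply/peqP; rewrite /piP reprK /= rho_inr rho_inl mul1r piM.
      by [].
    * move=> a; apply/peqP; rewrite /piP reprK.
      have := rho_gamma E F a 1; rewrite sc1 mul1r => ->.
      by rewrite /Defs.comp -subst_comp; exact: (esym (pi_unith E F _)).
  + exists (fun w => repr (@rho' k m n E F w 1)); split.
    * split.
      -- by move=> a b h; apply/peqP; rewrite /piP !reprK; apply: (rho'_resp hE hF).
      -- by move=> a b; apply/peqP; rewrite /piP piD !reprK.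
      -- by move=> c a; apply/peqP; rewrite /piP piM !reprK /= rho'_scal.
    * move=> t z; apply/peqP; rewrite /piP reprK /= rho'_inr rho'_inl mulr1 piM.
      by [].
    * move=> a; apply/peqP; rewrite /piP reprK.
      have := rho'_delta E F a 1; rewrite sc1 mul1r => ->.
      by rewrite /Defs.comp -subst_comp; exact: (esym (pi_unith E F _)).
Qed.
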